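(* Let $0<p<\infty$ and $\alpha>-1$. Suppose $w\in A^p_\beta$ for some $\beta$ with $-1<\beta<\alpha$, and suppose $\varphi$ is an entire function which is of order less than one, or of order one and type zero. Then the weighted superposition operator $S_{\varphi,w}$ is a bounded operator from the Bloch space $\mathcal B$ into $A^p_\alpha$, i.e. it maps $\mathcal B$ into $A^p_\alpha$ and for every $K>0$ there is a constant $C_K$ such that $\int_{\mathbb D}(1-|z|^2)^\alpha|w(z)|^p|\varphi(f(z))|^p\,dA(z)\le C_K$ for all $f\in\mathcal B$ with $\|f\|_{\mathcal B}\le K$.
   Context: $\mathbb D$ is the unit disc, $\mathcal H(\mathbb D)$ the analytic functions on it. For $\varphi$ entire and $w\in\mathcal H(\mathbb D)$, $S_{\varphi,w}(f)(z)=w(z)\varphi(f(z))$. For $0<p<\infty$, $\gamma>-1$, $A^p_\gamma$ is the set of $f\in\mathcal H(\mathbb D)$ with $\int_{\mathbb D}(1-|z|^2)^\gamma|f(z)|^p\,dA(z)<\infty$, $dA$ normalized area measure. The Bloch space $\mathcal B$ consists of $f\in\mathcal H(\mathbb D)$ with $\|f\|_{\mathcal B}=|f(0)|+\sup_{z\in\mathbb D}(1-|z|^2)|f'(z)|<\infty$. Since the operator is nonlinear, ''bounded'' means it maps bounded sets to bounded sets. *)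

(* Defs.v *)
From Stdlib Require Import Reals Lra Classical ClassicalEpsilon.
Open Scope R_scope.

Definition Cplx : Type := (R * R)%type.
Definition Cadd (z w : Cplx) : Cplx := (fst z + fst w, snd z + snd w).
Definition Csub (z w : Cplx) : Cplx := (fst z - fst w, snd z - snd w).
Definition Cmul (z w : Cplx) : Cplx :=
  (fst z * fst w - snd z * snd w, fst z * snd w + snd z * fst w).
Definition C0 : Cplx := (0, 0).
Definition Cnorm (z : Cplx) : R := sqrt (fst z * fst z + snd z * snd z).

Definition inD (z : Cplx) : Prop := Cnorm z < 1.

Definition is_cderiv_on (U : Cplx -> Prop) (f : Cplx -> Cplx) (z l : Cplx) : Prop :=
  forall eps, 0 < eps -> exists delta, 0 < delta /\
    forall h, h <> C0 -> Cnorm h < delta -> U (Cadd z h) ->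
      Cnorm (Csub (Csub (f (Cadd z h)) (f z)) (Cmul l h)) <= eps * Cnorm h.

(* f in H(D): complex differentiable at every point of D (values outside D irrelevant) *)
Definition analytic_D (f : Cplx -> Cplx) : Prop :=
  forall z, inD z -> exists l, is_cderiv_on inD f z l.

Definition entire (phi : Cplx -> Cplx) : Prop :=
  forall z, exists l, is_cderiv_on (fun _ => True) phi z l.

(* x^y for x >= 0 with the convention 0^y = 0 (y > 0 in all uses) *)
Definition rpow (x y : R) : R :=
  if Rlt_dec 0 x then Rpower x y else 0.

(* Riemann integral on [a,b], 0 if f is not Riemann integrable there
   (RiemannInt does not depend on the integrability proof) *)
Definition RInt (f : R -> R) (a b : R) : R :=
  match excluded_middle_informative (inhabited (Riemann_integrable f a b)) with
  | left H => RiemannInt (epsilon H (fun _ => True))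
  | right _ => 0
  end.

(* Integral of F over the disc of radius rho with respect to the normalized
   area measure dA = dx dy / pi, computed in polar coordinates. *)
Definition disc_int (F : Cplx -> R) (rho : R) : R :=
  / PI * RInt (fun r => r * RInt (fun t => F (r * cos t, r * sin t)) 0 (2 * PI)) 0 rho.

Definition bergman_integrand (p gamma : R) (g : Cplx -> Cplx) (z : Cplx) : R :=
  rpow (1 - Cnorm z ^ 2) gamma * rpow (Cnorm (g z)) p.

(* int_D (1-|z|^2)^gamma |g|^p dA <= M  (nonnegative integrand: limit of the
   integrals over discs of radius rho -> 1, i.e. their supremum) *)
Definition bergman_int_le (p gamma : R) (g : Cplx -> Cplx) (M : R) : Prop :=
  forall rho, 0 <= rho < 1 -> disc_int (bergman_integrand p gamma g) rho <= M.

Definition in_Apg (p gamma : R) (g : Cplx -> Cplx) : Prop :=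
  analytic_D g /\ exists M, bergman_int_le p gamma g M.

Definition bloch_norm_le (f : Cplx -> Cplx) (K : R) : Prop :=
  analytic_D f /\
  forall z l, inD z -> is_cderiv_on inD f z l ->
    Cnorm (f C0) + (1 - Cnorm z ^ 2) * Cnorm l <= K.

Definition in_Bloch (f : Cplx -> Cplx) : Prop := exists K, bloch_norm_le f K.

Definition growth_bound_pow (phi : Cplx -> Cplx) (mu : R) : Prop :=
  exists R0, 0 < R0 /\ forall z, R0 <= Cnorm z -> Cnorm (phi z) <= exp (Rpower (Cnorm z) mu).

(* order rho = inf { mu >= 0 | M(r) <= exp(r^mu) eventually } *)
Definition order_lt_one (phi : Cplx -> Cplx) : Prop :=
  exists mu, 0 <= mu < 1 /\ growth_bound_pow phi mu.

Definition order_eq_one (phi : Cplx -> Cplx) : Prop :=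
  (forall mu, 1 < mu -> growth_bound_pow phi mu) /\ ~ order_lt_one phi.

(* type (for order 1) = limsup_{r->oo} log M(r) / r ; type zero means
   for every sigma > 0, M(r) <= exp(sigma r) eventually *)
Definition type_zero_order_one (phi : Cplx -> Cplx) : Prop :=
  forall sigma, 0 < sigma -> exists R0, 0 < R0 /\
    forall z, R0 <= Cnorm z -> Cnorm (phi z) <= exp (sigma * Cnorm z).

Definition S_op (phi w f : Cplx -> Cplx) : Cplx -> Cplx := fun z => Cmul (w z) (phi (f z)).

(* Main.v *)
Require Import Defs.
From Stdlib Require Import Reals Lra Psatz Classical ClassicalEpsilon.
Open Scope R_scope.


Lemma Cnorm_ge0 z : 0 <= Cnorm z.
Proof. unfold Cnorm; apply sqrt_pos. Qed.

Lemma Cnorm_sq z : Cnorm z * Cnorm z = fst z * fst z + snd z * snd z.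
Proof. unfold Cnorm; rewrite sqrt_sqrt; nra. Qed.

Lemma sq_le_le x y : 0 <= y -> x * x <= y * y -> x <= y.
Proof. intros; nra. Qed.

Lemma sq_lt_lt x y : 0 <= y -> x * x < y * y -> x < y.
Proof. intros; nra. Qed.

Lemma Cnorm_le_of_sq z c : 0 <= c -> fst z * fst z + snd z * snd z <= c * c -> Cnorm z <= c.
Proof. intros; apply sq_le_le; auto; rewrite Cnorm_sq; auto. Qed.

Lemma Cnorm_mul a b : Cnorm (Cmul a b) = Cnorm a * Cnorm b.
Proof.
  unfold Cnorm, Cmul; simpl. rewrite <- sqrt_mult by nra. f_equal. ring.
Qed.

Lemma Cnorm_add a b : Cnorm (Cadd a b) <= Cnorm a + Cnorm b.
Proof.
  apply sq_le_le. pose proof (Cnorm_ge0 a); pose proof (Cnorm_ge0 b); lra.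
  rewrite Cnorm_sq. pose proof (Cnorm_sq a); pose proof (Cnorm_sq b).
  pose proof (Cnorm_ge0 a); pose proof (Cnorm_ge0 b).
  destruct a as [a1 a2]; destruct b as [b1 b2]; unfold Cadd; simpl in *.
  assert (a1*b1 + a2*b2 <= Cnorm (a1,a2) * Cnorm (b1,b2)).
  { apply sq_le_le. apply Rmult_le_pos; auto. replace (Cnorm (a1, a2) * Cnorm (b1, b2) * (Cnorm (a1, a2) * Cnorm (b1, b2)))
     with ((Cnorm (a1, a2) * Cnorm (a1, a2)) * (Cnorm (b1, b2) * Cnorm (b1, b2))) by ring.
    rewrite H, H0. pose proof (Rle_0_sqr (a1*b2-a2*b1)); unfold Rsqr in *; nra. }
  nra.
Qed.

Lemma Cnorm_fst z : Rabs (fst z) <= Cnorm z.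
Proof. apply sq_le_le. apply Cnorm_ge0. rewrite Cnorm_sq. rewrite <- Rabs_mult, Rabs_right by nra. nra. Qed.
Lemma Cnorm_snd z : Rabs (snd z) <= Cnorm z.
Proof. apply sq_le_le. apply Cnorm_ge0. rewrite Cnorm_sq. rewrite <- Rabs_mult, Rabs_right by nra. nra. Qed.

Lemma Rabs_sq x : Rabs x * Rabs x = x * x.
Proof. rewrite <- Rabs_mult; apply Rabs_right; nra. Qed.

Lemma Cnorm_le_sum z : Cnorm z <= Rabs (fst z) + Rabs (snd z).
Proof. apply Cnorm_le_of_sq. pose proof (Rabs_pos (fst z)); pose proof (Rabs_pos (snd z)); lra.
  pose proof (Rabs_pos (fst z)); pose proof (Rabs_pos (snd z)).
  rewrite <- (Rabs_sq (fst z)), <- (Rabs_sq (snd z)). nra. Qed.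

Lemma Cnorm_C0 : Cnorm C0 = 0.
Proof. unfold Cnorm, C0; simpl. replace (0*0+0*0) with 0 by ring. apply sqrt_0. Qed.

Lemma Cnorm_eq0 z : Cnorm z = 0 -> z = C0.
Proof. intro H. pose proof (Cnorm_sq z). rewrite H in H0. destruct z as [a b]; simpl in *.
  unfold C0; f_equal; nra. Qed.

Lemma Cnorm_pos z : z <> C0 -> 0 < Cnorm z.
Proof. intros. destruct (Cnorm_ge0 z); auto. exfalso; apply H, Cnorm_eq0; auto. Qed.

Lemma Csub_add a b : Csub a b = Cadd a (Cmul (-1,0) b).
Proof. destruct a, b; unfold Csub, Cadd, Cmul; simpl; f_equal; ring. Qed.

Lemma Cnorm_opp b : Cnorm (Cmul (-1,0) b) = Cnorm b.
Proof. rewrite Cnorm_mul. replace (Cnorm (-1,0)) with 1. ring. unfold Cnorm; simpl.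
  replace (-1 * -1 + 0*0) with 1 by ring. rewrite sqrt_1; auto. Qed.

Lemma Cnorm_sub a b : Cnorm (Csub a b) <= Cnorm a + Cnorm b.
Proof. rewrite Csub_add. eapply Rle_trans. apply Cnorm_add. rewrite Cnorm_opp. lra. Qed.

Lemma Cnorm_sub_sym a b : Cnorm (Csub a b) = Cnorm (Csub b a).
Proof. unfold Cnorm, Csub; simpl. f_equal; ring. Qed.

Lemma Cnorm_rev_tri a b : Rabs (Cnorm a - Cnorm b) <= Cnorm (Csub a b).
Proof.
  assert (Cnorm a <= Cnorm (Csub a b) + Cnorm b).
  { replace a with (Cadd (Csub a b) b) at 1. apply Cnorm_add. destruct a, b; unfold Cadd, Csub; simpl; f_equal; ring. }
  assert (Cnorm b <= Cnorm (Csub a b) + Cnorm a).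
  { replace b with (Cadd (Csub b a) a) at 1. rewrite (Cnorm_sub_sym a b). apply Cnorm_add. destruct a, b; unfold Cadd, Csub; simpl; f_equal; ring. }
  apply Rabs_le; lra.
Qed.

Lemma dot_le (v u : Cplx) : fst v * fst u + snd v * snd u <= Cnorm v * Cnorm u.
Proof.
  pose proof (Cnorm_ge0 v); pose proof (Cnorm_ge0 u).
  apply sq_le_le. nra.
  replace (Cnorm v * Cnorm u * (Cnorm v * Cnorm u)) with ((Cnorm v * Cnorm v) * (Cnorm u * Cnorm u)) by ring.
  rewrite !Cnorm_sq. pose proof (Rle_0_sqr (fst v * snd u - snd v * fst u)); unfold Rsqr in *; nra.
Qed.

Lemma Cnorm_polar r t : Cnorm (r * cos t, r * sin t) = Rabs r.
Proof. unfold Cnorm; simpl. replace (r * cos t * (r * cos t) + r * sin t * (r * sin t)) with (r*r * (Rsqr (sin t) + Rsqr (cos t))) by (unfold Rsqr; ring).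
  rewrite sin2_cos2, Rmult_1_r. apply sqrt_Rsqr_abs. Qed.

Lemma Cnorm_scal s z : Cnorm (s * fst z, s * snd z) = Rabs s * Cnorm z.
Proof. unfold Cnorm; simpl. replace (s * fst z * (s * fst z) + s * snd z * (s * snd z)) with (Rsqr s * (fst z * fst z + snd z * snd z)) by (unfold Rsqr; ring).
  rewrite sqrt_mult. rewrite sqrt_Rsqr_abs; auto. apply Rle_0_sqr. nra. Qed.


Lemma Cadd_Csub z u : Cadd z (Csub u z) = u.
Proof. destruct z, u; unfold Cadd, Csub; simpl; f_equal; ring. Qed.

Lemma Csub_eq0 u z : Csub u z = C0 -> u = z.
Proof. destruct u, z; unfold Csub, C0; simpl; intro H; injection H; intros; f_equal; lra. Qed.

Lemma Csub_self z : Csub z z = C0.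
Proof. destruct z; unfold Csub, C0; simpl; f_equal; ring. Qed.

Lemma Csub_Cadd z h : Csub (Cadd z h) z = h.
Proof. destruct z, h; unfold Cadd, Csub; simpl; f_equal; ring. Qed.

Definition ccont (U : Cplx -> Prop) (g : Cplx -> Cplx) (z : Cplx) : Prop :=
  forall eps, 0 < eps -> exists delta, 0 < delta /\
    forall u, U u -> Cnorm (Csub u z) < delta -> Cnorm (Csub (g u) (g z)) < eps.

Lemma deriv_bound U g z l : is_cderiv_on U g z l ->
  exists delta, 0 < delta /\ forall u, U u -> Cnorm (Csub u z) < delta ->
    Cnorm (Csub (g u) (g z)) <= (Cnorm l + 1) * Cnorm (Csub u z).
Proof.
  intros Hd. destruct (Hd 1 Rlt_0_1) as [d [Hd0 Hd1]]. exists d; split; auto.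
  intros u Uu Hu. destruct (classic (Csub u z = C0)) as [E|E].
  - apply Csub_eq0 in E; subst. rewrite !Csub_self, !Cnorm_C0. rewrite Rmult_0_r; lra.
  - rewrite <- (Cadd_Csub z u) in Uu. specialize (Hd1 _ E Hu Uu). rewrite Cadd_Csub in Hd1.
    set (h := Csub u z) in *.
    replace (Csub (g u) (g z)) with (Cadd (Cmul l h) (Csub (Csub (g u) (g z)) (Cmul l h))).
    2:{ destruct (g u), (g z), l, h; unfold Cadd, Csub, Cmul; simpl; f_equal; ring. }
    eapply Rle_trans. apply Cnorm_add. rewrite Cnorm_mul. lra.
Qed.

Lemma deriv_cont U g z l : is_cderiv_on U g z l -> ccont U g z.
Proof.
  intros Hd eps He. destruct (deriv_bound _ _ _ _ Hd) as [d [Hd0 Hd1]].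
  pose proof (Cnorm_ge0 l).
  exists (Rmin d (eps / (Cnorm l + 1))). split.
  - apply Rmin_pos; auto. apply Rdiv_lt_0_compat; lra.
  - intros u Uu Hu. eapply Rle_lt_trans. apply Hd1; auto. eapply Rlt_le_trans; eauto. apply Rmin_l.
    assert (Cnorm (Csub u z) < eps / (Cnorm l + 1)) by (eapply Rlt_le_trans; eauto; apply Rmin_r).
    apply (Rmult_lt_compat_l (Cnorm l + 1)) in H0; [|lra].
    replace ((Cnorm l + 1) * (eps / (Cnorm l + 1))) with eps in H0 by (field; lra). lra.
Qed.

Lemma chain_id (G1 G0 X Y l1 l2 h : Cplx) :
  Csub (Csub G1 G0) (Cmul (Cmul l2 l1) h) =
  Cadd (Csub (Csub G1 G0) (Cmul l2 (Csub X Y))) (Cmul l2 (Csub (Csub X Y) (Cmul l1 h))).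
Proof. destruct G1, G0, X, Y, l1, l2, h; unfold Cadd, Csub, Cmul; simpl; f_equal; ring. Qed.

Lemma decomp_id (X Y l h : Cplx) : Csub X Y = Cadd (Cmul l h) (Csub (Csub X Y) (Cmul l h)).
Proof. destruct X, Y, l, h; unfold Cadd, Csub, Cmul; simpl; f_equal; ring. Qed.

Lemma chain_rule U f g z l1 l2 :
  is_cderiv_on U f z l1 -> is_cderiv_on (fun _ => True) g (f z) l2 ->
  is_cderiv_on U (fun u => g (f u)) z (Cmul l2 l1).
Proof.
  intros Hf Hg eps He.
  pose proof (Cnorm_ge0 l1) as N1; pose proof (Cnorm_ge0 l2) as N2.
  set (e1 := Rmin 1 (eps / (2 * (Cnorm l2 + 1)))).
  set (e2 := eps / (2 * (Cnorm l1 + 1))).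
  assert (He1 : 0 < e1). { apply Rmin_pos. lra. apply Rdiv_lt_0_compat; lra. }
  assert (He2 : 0 < e2). { apply Rdiv_lt_0_compat; lra. }
  destruct (Hf e1 He1) as [d1 [Hd1 Hf1]]. destruct (Hg e2 He2) as [d2 [Hd2 Hg1]].
  exists (Rmin d1 (d2 / (Cnorm l1 + 1))). split.
  { apply Rmin_pos; auto. apply Rdiv_lt_0_compat; lra. }
  intros h Hh0 Hh Uh.
  assert (Hhd1 : Cnorm h < d1) by (eapply Rlt_le_trans; [exact Hh|]; apply Rmin_l).
  assert (Hhd2 : Cnorm h < d2 / (Cnorm l1 + 1)) by (eapply Rlt_le_trans; [exact Hh|]; apply Rmin_r).
  specialize (Hf1 h Hh0 Hhd1 Uh).
  set (X := f (Cadd z h)) in *. set (Y := f z) in *.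
  set (E1 := Csub (Csub X Y) (Cmul l1 h)) in *.
  pose proof (Cnorm_ge0 h) as Nh.
  assert (HD : Cnorm (Csub X Y) <= (Cnorm l1 + 1) * Cnorm h).
  { rewrite (decomp_id X Y l1 h). eapply Rle_trans. apply Cnorm_add. rewrite Cnorm_mul.
    fold E1. assert (e1 <= 1) by apply Rmin_l. nra. }
  assert (HD2 : Cnorm (Csub X Y) < d2).
  { apply (Rmult_lt_compat_l (Cnorm l1 + 1)) in Hhd2; [|lra].
    replace ((Cnorm l1 + 1) * (d2 / (Cnorm l1 + 1))) with d2 in Hhd2 by (field; lra). lra. }
  assert (HE2 : Cnorm (Csub (Csub (g X) (g Y)) (Cmul l2 (Csub X Y))) <= e2 * Cnorm (Csub X Y)).
  { destruct (classic (Csub X Y = C0)) as [E|E].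
    - rewrite E. pose proof (Csub_eq0 _ _ E) as E'. rewrite E', Csub_self.
      replace (Csub C0 (Cmul l2 C0)) with C0 by (destruct l2; unfold Csub, Cmul, C0; simpl; f_equal; ring).
      rewrite Cnorm_C0; lra.
    - specialize (Hg1 _ E HD2 I). rewrite Cadd_Csub in Hg1. exact Hg1. }
  rewrite (chain_id _ _ X Y l1 l2 h).
  eapply Rle_trans. apply Cnorm_add. rewrite Cnorm_mul. fold E1.
  assert (e2 * Cnorm (Csub X Y) <= eps / 2 * Cnorm h).
  { eapply Rle_trans. apply Rmult_le_compat_l. lra. apply HD.
    unfold e2. apply Req_le. field. lra. }
  assert (Cnorm l2 * Cnorm E1 <= eps / 2 * Cnorm h).
  { eapply Rle_trans. apply Rmult_le_compat_l. lra. apply Hf1.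
    assert (e1 <= eps / (2 * (Cnorm l2 + 1))) by apply Rmin_r.
    assert (Cnorm l2 * e1 <= eps / 2).
    { eapply Rle_trans. apply Rmult_le_compat_l. lra. apply H0.
      apply (Rmult_le_reg_r (2 * (Cnorm l2 + 1))). lra.
      replace (Cnorm l2 * (eps / (2 * (Cnorm l2 + 1))) * (2 * (Cnorm l2 + 1))) with (Cnorm l2 * eps) by (field; lra).
      nra. }
    nra. }
  lra.
Qed.

Lemma prod_id (A1 A0 B1 B0 la lb h : Cplx) :
  Csub (Csub (Cmul A1 B1) (Cmul A0 B0)) (Cmul (Cadd (Cmul A0 lb) (Cmul la B0)) h) =
  Cadd (Cadd (Cmul A0 (Csub (Csub B1 B0) (Cmul lb h))) (Cmul (Csub (Csub A1 A0) (Cmul la h)) B0))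
       (Cmul (Csub A1 A0) (Csub B1 B0)).
Proof. destruct A1, A0, B1, B0, la, lb, h; unfold Cadd, Csub, Cmul; simpl; f_equal; ring. Qed.

Lemma prod_rule U a b z la lb :
  is_cderiv_on U a z la -> is_cderiv_on U b z lb ->
  is_cderiv_on U (fun u => Cmul (a u) (b u)) z (Cadd (Cmul (a z) lb) (Cmul la (b z))).
Proof.
  intros Ha Hb eps He.
  pose proof (Cnorm_ge0 la) as Na; pose proof (Cnorm_ge0 lb) as Nb.
  pose proof (Cnorm_ge0 (a z)) as NA; pose proof (Cnorm_ge0 (b z)) as NB.
  set (e := Rmin 1 (eps / (2 * (Cnorm (a z) + Cnorm (b z) + 1)))).
  assert (He1 : 0 < e). { apply Rmin_pos. lra. apply Rdiv_lt_0_compat; lra. }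
  assert (He2 : e <= 1) by apply Rmin_l.
  assert (He3 : e * (Cnorm (a z) + Cnorm (b z)) <= eps / 2).
  { assert (e <= eps / (2 * (Cnorm (a z) + Cnorm (b z) + 1))) by apply Rmin_r.
    eapply Rle_trans. apply Rmult_le_compat_r. lra. apply H.
    apply (Rmult_le_reg_r (2 * (Cnorm (a z) + Cnorm (b z) + 1))). lra.
    replace (eps / (2 * (Cnorm (a z) + Cnorm (b z) + 1)) * (Cnorm (a z) + Cnorm (b z)) *
       (2 * (Cnorm (a z) + Cnorm (b z) + 1))) with (eps * (Cnorm (a z) + Cnorm (b z))) by (field; lra).
    nra. }
  destruct (Ha e He1) as [d1 [Hd1 Ha1]]. destruct (Hb e He1) as [d2 [Hd2 Hb1]].
  set (c := (Cnorm la + 1) * (Cnorm lb + 1)).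
  assert (Hc : 0 < c) by (unfold c; nra).
  exists (Rmin (Rmin d1 d2) (eps / (2 * c))). split.
  { apply Rmin_pos. apply Rmin_pos; auto. apply Rdiv_lt_0_compat; lra. }
  intros h Hh0 Hh Uh.
  assert (Hh1 : Cnorm h < d1) by (eapply Rlt_le_trans; [exact Hh|]; eapply Rle_trans; apply Rmin_l).
  assert (Hh2 : Cnorm h < d2) by (eapply Rlt_le_trans; [exact Hh|]; eapply Rle_trans; [apply Rmin_l| apply Rmin_r]).
  assert (Hh3 : Cnorm h < eps / (2 * c)) by (eapply Rlt_le_trans; [exact Hh|]; apply Rmin_r).
  specialize (Ha1 h Hh0 Hh1 Uh). specialize (Hb1 h Hh0 Hh2 Uh).
  pose proof (Cnorm_ge0 h) as Nh.
  rewrite prod_id.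
  set (Ea := Csub (Csub (a (Cadd z h)) (a z)) (Cmul la h)) in *.
  set (Eb := Csub (Csub (b (Cadd z h)) (b z)) (Cmul lb h)) in *.
  assert (HA : Cnorm (Csub (a (Cadd z h)) (a z)) <= (Cnorm la + 1) * Cnorm h).
  { rewrite (decomp_id _ _ la h). eapply Rle_trans. apply Cnorm_add. rewrite Cnorm_mul. fold Ea. nra. }
  assert (HB : Cnorm (Csub (b (Cadd z h)) (b z)) <= (Cnorm lb + 1) * Cnorm h).
  { rewrite (decomp_id _ _ lb h). eapply Rle_trans. apply Cnorm_add. rewrite Cnorm_mul. fold Eb. nra. }
  eapply Rle_trans. apply Cnorm_add. eapply Rle_trans. apply Rplus_le_compat_r. apply Cnorm_add.
  rewrite !Cnorm_mul.
  pose proof (Cnorm_ge0 Ea); pose proof (Cnorm_ge0 Eb).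
  pose proof (Cnorm_ge0 (Csub (a (Cadd z h)) (a z))); pose proof (Cnorm_ge0 (Csub (b (Cadd z h)) (b z))).
  assert (T1 : Cnorm (a z) * Cnorm Eb + Cnorm Ea * Cnorm (b z) <= eps / 2 * Cnorm h).
  { assert (Cnorm (a z) * Cnorm Eb <= Cnorm (a z) * (e * Cnorm h)) by (apply Rmult_le_compat_l; auto).
    assert (Cnorm Ea * Cnorm (b z) <= (e * Cnorm h) * Cnorm (b z)) by (apply Rmult_le_compat_r; auto).
    nra. }
  assert (T2 : Cnorm (Csub (a (Cadd z h)) (a z)) * Cnorm (Csub (b (Cadd z h)) (b z)) <= eps / 2 * Cnorm h).
  { eapply Rle_trans. apply Rmult_le_compat; eauto.
    replace ((Cnorm la + 1) * Cnorm h * ((Cnorm lb + 1) * Cnorm h)) with (c * Cnorm h * Cnorm h) by (unfold c; ring).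
    assert (c * Cnorm h <= eps / 2).
    { apply (Rmult_lt_compat_l c) in Hh3; auto. replace (c * (eps / (2 * c))) with (eps / 2) in Hh3 by (field; lra). lra. }
    nra. }
  lra.
Qed.


Lemma cont_ind (P : R -> Prop) c d : c <= d -> P c ->
  (forall m, c <= m <= d -> exists eta, 0 < eta /\
     forall s, c <= s -> m - eta < s -> P s -> P (Rmin (m + eta) d)) -> P d.
Proof.
  intros Hcd Pc Hstep.
  set (E := fun s => c <= s <= d /\ P s).
  assert (Hb : bound E) by (exists d; intros x [[? ?] ?]; auto).
  assert (He : exists x, E x) by (exists c; split; [lra|auto]).
  destruct (completeness E Hb He) as [m [Hub Hlub]].
  assert (Hcm : c <= m) by (apply Hub; split; [lra|auto]).
  assert (Hmd : m <= d) by (apply Hlub; intros x [[? ?] ?]; auto).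
  destruct (Hstep m (conj Hcm Hmd)) as [eta [Heta Hs]].
  assert (Hex : exists s, E s /\ m - eta < s).
  { apply NNPP; intro Hn.
    assert (m <= m - eta).
    { apply Hlub. intros x Ex. apply Rnot_lt_le. intro Hl. apply Hn. exists x; auto. }
    lra. }
  destruct Hex as [s [[[Hs1 Hs2] Ps] Hs3]].
  specialize (Hs s Hs1 Hs3 Ps).
  assert (Hmin : Rmin (m + eta) d <= m).
  { apply Hub. split; auto. split.
    - apply Rmin_glb; lra.
    - apply Rmin_r. }
  unfold Rmin in *. destruct (Rle_dec (m + eta) d); [lra|auto].
Qed.

Definition jcont (G : R -> R -> R) (r0 t0 : R) : Prop :=
  forall eps, 0 < eps -> exists delta, 0 < delta /\
    forall r t, Rabs (r - r0) < delta -> Rabs (t - t0) < delta -> Rabs (G r t - G r0 t0) < eps.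

Lemma tube G r0 c d : c <= d -> (forall t, c <= t <= d -> jcont G r0 t) ->
  forall eps, 0 < eps -> exists delta, 0 < delta /\
    forall r, Rabs (r - r0) < delta -> forall t, c <= t <= d -> Rabs (G r t - G r0 t) < eps.
Proof.
  intros Hcd Hj eps He.
  cut (exists delta, 0 < delta /\
    forall r, Rabs (r - r0) < delta -> forall t, c <= t <= d -> Rabs (G r t - G r0 t) < eps); [auto|].
  apply (cont_ind (fun s => exists delta, 0 < delta /\
    forall r, Rabs (r - r0) < delta -> forall t, c <= t <= s -> Rabs (G r t - G r0 t) < eps) c d); auto.
  - destruct (Hj c (conj (Rle_refl c) Hcd) eps He) as [dl [Hdl H]].
    exists dl; split; auto. intros r Hr t Ht. replace t with c by lra. apply H; auto.
    rewrite Rminus_diag, Rabs_R0; auto.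
  - intros m Hm. destruct (Hj m Hm (eps/2)) as [d1 [Hd1 H1]]. lra.
    exists (d1/2); split; [lra|].
    intros s Hs1 Hs2 [ds [Hds Hs]].
    exists (Rmin ds d1); split. apply Rmin_pos; auto.
    intros r Hr t Ht.
    destruct (Rle_dec t s).
    + apply Hs; [eapply Rlt_le_trans; [exact Hr|apply Rmin_l] | lra].
    + assert (Htm : Rabs (t - m) < d1).
      { assert (t <= m + d1/2) by (eapply Rle_trans; [apply Ht|apply Rmin_l]).
        apply Rabs_def1; lra. }
      assert (Hr1 : Rabs (r - r0) < d1) by (eapply Rlt_le_trans; [exact Hr|apply Rmin_r]).
      pose proof (H1 r t Hr1 Htm).
      assert (Hr0 : Rabs (r0 - r0) < d1) by (rewrite Rminus_diag, Rabs_R0; auto).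
      pose proof (H1 r0 t Hr0 Htm).
      replace (G r t - G r0 t) with ((G r t - G r0 m) - (G r0 t - G r0 m)) by ring.
      eapply Rle_lt_trans. apply Rabs_triang. rewrite Rabs_Ropp. lra.
Qed.

Lemma jcont_cpt G x t : jcont G x t -> continuity_pt (fun s => G x s) t.
Proof.
  intros Hj eps He. destruct (Hj eps He) as [dl [Hdl H]].
  exists dl; split; auto. intros y [_ Hy]. unfold R_dist in *; simpl in *.
  apply H; auto. rewrite Rminus_diag, Rabs_R0; auto.
Qed.

Lemma line_bound G x c d : c <= d -> (forall t, c <= t <= d -> jcont G x t) ->
  exists B, forall t, c <= t <= d -> Rabs (G x t) <= B.
Proof.
  intros Hcd Hj.
  destruct (continuity_ab_maj (fun t => Rabs (G x t)) c d Hcd) as [M [HM _]].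
  - intros t Ht. apply (continuity_pt_comp (fun s => G x s) Rabs). apply jcont_cpt; auto.
    apply Rcontinuity_abs.
  - exists (Rabs (G x M)). auto.
Qed.

Lemma square_bound G a b c d : a <= b -> c <= d ->
  (forall x t, a <= x <= b -> c <= t <= d -> jcont G x t) ->
  exists B, forall x t, a <= x <= b -> c <= t <= d -> Rabs (G x t) <= B.
Proof.
  intros Hab Hcd Hj.
  cut (exists B, forall x t, a <= x <= b -> c <= t <= d -> Rabs (G x t) <= B); [auto|].
  apply (cont_ind (fun s => exists B, forall x t, a <= x <= s -> c <= t <= d -> Rabs (G x t) <= B) a b); auto.
  - destruct (line_bound G a c d Hcd) as [B HB]. intros; apply Hj; auto; lra.
    exists B. intros x t Hx Ht. replace x with a by lra. auto.
  - intros m Hm. destruct (tube G m c d Hcd (fun t Ht => Hj m t Hm Ht) 1 Rlt_0_1) as [dl [Hdl Ht]].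
    destruct (line_bound G m c d Hcd) as [B1 HB1]. intros; apply Hj; auto.
    exists (dl/2); split; [lra|].
    intros s Hs1 Hs2 [Bs HBs].
    exists (Rmax Bs (B1 + 1)). intros x t Hx Ht'.
    destruct (Rle_dec x s).
    + eapply Rle_trans. apply HBs; auto; lra. apply Rmax_l.
    + eapply Rle_trans; [|apply Rmax_r].
      assert (Rabs (x - m) < dl).
      { assert (x <= m + dl/2) by (eapply Rle_trans; [apply Hx|apply Rmin_l]). apply Rabs_def1; lra. }
      specialize (Ht x H t Ht'). specialize (HB1 t Ht').
      replace (G x t) with ((G x t - G m t) + G m t) by ring.
      eapply Rle_trans. apply Rabs_triang. lra.
Qed.


Lemma cpt_eps f x : continuity_pt f x ->
  forall eps, 0 < eps -> exists delta, 0 < delta /\ forall y, Rabs (y - x) < delta -> Rabs (f y - f x) < eps.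
Proof.
  intros H eps He. destruct (H eps He) as [d [Hd H']]. exists d; split; auto.
  intros y Hy. destruct (Req_dec y x) as [E|E].
  - subst. rewrite Rminus_diag, Rabs_R0; auto.
  - apply (H' y). split. split; auto. exact I. auto.
Qed.

Lemma eps_cpt f x : (forall eps, 0 < eps -> exists delta, 0 < delta /\ forall y, Rabs (y - x) < delta -> Rabs (f y - f x) < eps) ->
  continuity_pt f x.
Proof.
  intros H eps He. destruct (H eps He) as [d [Hd H']]. exists d; split; auto.
  intros y [_ Hy]. apply H'. auto.
Qed.

Definition rcont (F : Cplx -> R) (z0 : Cplx) : Prop :=
  forall eps, 0 < eps -> exists delta, 0 < delta /\
    forall u, Cnorm (Csub u z0) < delta -> Rabs (F u - F z0) < eps.

Lemma rcont_comp F h z0 : rcont F z0 -> continuity_pt h (F z0) -> rcont (fun u => h (F u)) z0.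
Proof.
  intros HF Hh eps He. destruct (cpt_eps _ _ Hh eps He) as [d1 [Hd1 H1]].
  destruct (HF d1 Hd1) as [d2 [Hd2 H2]]. exists d2; split; auto.
Qed.

Lemma rcont_mul F G z0 : rcont F z0 -> rcont G z0 -> rcont (fun u => F u * G u) z0.
Proof.
  intros HF HG eps He.
  set (a := Rabs (F z0)). set (b := Rabs (G z0)).
  assert (Ha : 0 <= a) by apply Rabs_pos. assert (Hb : 0 <= b) by apply Rabs_pos.
  set (e := Rmin 1 (eps / (a + b + 1))).
  assert (He0 : 0 < e) by (apply Rmin_pos; [lra| apply Rdiv_lt_0_compat; lra]).
  assert (He1 : e <= 1) by apply Rmin_l.
  assert (He2 : e * (a + b + 1) <= eps).
  { assert (e <= eps / (a + b + 1)) by apply Rmin_r.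
    apply (Rmult_le_compat_r (a + b + 1)) in H; [|lra].
    replace (eps / (a + b + 1) * (a + b + 1)) with eps in H by (field; lra). lra. }
  destruct (HF e He0) as [d1 [Hd1 H1]]. destruct (HG e He0) as [d2 [Hd2 H2]].
  exists (Rmin d1 d2); split. apply Rmin_pos; auto.
  intros u Hu.
  specialize (H1 u (Rlt_le_trans _ _ _ Hu (Rmin_l _ _))).
  specialize (H2 u (Rlt_le_trans _ _ _ Hu (Rmin_r _ _))).
  replace (F u * G u - F z0 * G z0) with ((F u - F z0) * G z0 + F z0 * (G u - G z0) + (F u - F z0) * (G u - G z0)) by ring.
  eapply Rle_lt_trans. apply Rabs_triang. eapply Rle_lt_trans. apply Rplus_le_compat_r. apply Rabs_triang.
  rewrite !Rabs_mult. fold a b.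
  pose proof (Rabs_pos (F u - F z0)); pose proof (Rabs_pos (G u - G z0)).
  assert (Rabs (F u - F z0) * b <= e * b) by (apply Rmult_le_compat_r; lra).
  assert (a * Rabs (G u - G z0) <= a * e) by (apply Rmult_le_compat_l; lra).
  assert (Rabs (F u - F z0) * Rabs (G u - G z0) < e * 1) by (apply Rmult_le_0_lt_compat; lra).
  nra.
Qed.

Lemma rcont_Cnorm z0 : rcont Cnorm z0.
Proof.
  intros eps He. exists eps; split; auto. intros u Hu.
  eapply Rle_lt_trans. apply Cnorm_rev_tri. auto.
Qed.

Lemma rcont_norm_ccont w z0 : inD z0 -> ccont inD w z0 -> rcont (fun u => Cnorm (w u)) z0.
Proof.
  intros Hz Hw eps He. destruct (Hw eps He) as [d [Hd H]].
  unfold inD in Hz.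
  exists (Rmin d (1 - Cnorm z0)); split. apply Rmin_pos; lra.
  intros u Hu. eapply Rle_lt_trans. apply Cnorm_rev_tri. apply H.
  - unfold inD. assert (Cnorm (Csub u z0) < 1 - Cnorm z0) by (eapply Rlt_le_trans; [exact Hu|apply Rmin_r]).
    replace u with (Cadd (Csub u z0) z0) by (destruct u, z0; unfold Cadd, Csub; simpl; f_equal; ring).
    eapply Rle_lt_trans. apply Cnorm_add. lra.
  - eapply Rlt_le_trans; [exact Hu|apply Rmin_l].
Qed.

Lemma rpow_pos x y : 0 < x -> rpow x y = Rpower x y.
Proof. intros; unfold rpow; destruct (Rlt_dec 0 x); [auto|lra]. Qed.

Lemma rpow_nonpos x y : x <= 0 -> rpow x y = 0.
Proof. intros; unfold rpow; destruct (Rlt_dec 0 x); [lra|auto]. Qed.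

Lemma rpow_ge0 x y : 0 <= rpow x y.
Proof. unfold rpow; destruct (Rlt_dec 0 x). unfold Rpower; left; apply exp_pos. lra. Qed.

Lemma rpow_cont_pos x0 y : 0 < x0 -> continuity_pt (fun x => rpow x y) x0.
Proof.
  intros Hx. apply (continuity_pt_locally_ext (fun x => Rpower x y) _ x0); auto.
  - intros z Hz. unfold Rdist in Hz. rewrite rpow_pos; auto. apply Rabs_def2 in Hz. lra.
  - apply derivable_continuous_pt. exists (y * Rpower x0 (y - 1)). apply derivable_pt_lim_power; auto.
Qed.

Lemma rpow_cont_0 y : 0 < y -> continuity_pt (fun x => rpow x y) 0.
Proof.
  intros Hy. apply eps_cpt. intros eps He. exists (Rpower eps (/ y)). split. unfold Rpower; apply exp_pos.
  intros z Hz. rewrite (rpow_nonpos 0) by lra. rewrite Rminus_0_r in *.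
  destruct (Rle_dec z 0). rewrite rpow_nonpos by auto. rewrite Rabs_R0; auto.
  rewrite rpow_pos by lra. rewrite Rabs_right by (left; unfold Rpower; apply exp_pos).
  rewrite Rabs_right in Hz by lra.
  replace eps with (Rpower (Rpower eps (/ y)) y).
  apply Rlt_Rpower_l; auto. lra.
  rewrite Rpower_mult. rewrite Rinv_l by lra. apply Rpower_1; auto.
Qed.

Lemma rpow_cont x0 y : 0 <= x0 -> 0 < y -> continuity_pt (fun x => rpow x y) x0.
Proof. intros [H|H] Hy. apply rpow_cont_pos; auto. subst; apply rpow_cont_0; auto. Qed.

Lemma polar_jcont F r0 t0 : rcont F (r0 * cos t0, r0 * sin t0) ->
  jcont (fun r t => F (r * cos t, r * sin t)) r0 t0.
Proof.
  intros HF eps He. destruct (HF eps He) as [dF [HdF H]].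
  set (k := dF / (4 * (Rabs r0 + 1))).
  assert (Hk : 0 < k) by (apply Rdiv_lt_0_compat; [lra| pose proof (Rabs_pos r0); lra]).
  destruct (cpt_eps _ _ (continuity_cos t0) k Hk) as [dc [Hdc Hc]].
  destruct (cpt_eps _ _ (continuity_sin t0) k Hk) as [ds [Hds Hs]].
  exists (Rmin (dF / 4) (Rmin dc ds)). split.
  { apply Rmin_pos. lra. apply Rmin_pos; auto. }
  intros r t Hr Ht. apply H.
  assert (Hr' : Rabs (r - r0) < dF / 4) by (eapply Rlt_le_trans; [exact Hr|apply Rmin_l]).
  assert (Ht1 : Rabs (t - t0) < dc) by (eapply Rlt_le_trans; [exact Ht| eapply Rle_trans; [apply Rmin_r| apply Rmin_l]]).
  assert (Ht2 : Rabs (t - t0) < ds) by (eapply Rlt_le_trans; [exact Ht| eapply Rle_trans; [apply Rmin_r| apply Rmin_r]]).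
  specialize (Hc t Ht1). specialize (Hs t Ht2).
  assert (Hr0k : Rabs r0 * k <= dF / 4).
  { unfold k. apply (Rmult_le_reg_r (4 * (Rabs r0 + 1))). pose proof (Rabs_pos r0); lra.
    replace (Rabs r0 * (dF / (4 * (Rabs r0 + 1))) * (4 * (Rabs r0 + 1))) with (Rabs r0 * dF) by (field; pose proof (Rabs_pos r0); lra).
    pose proof (Rabs_pos r0). nra. }
  eapply Rle_lt_trans. apply Cnorm_le_sum. simpl.
  assert (A1 : Rabs (r * cos t - r0 * cos t0) < dF / 2).
  { replace (r * cos t - r0 * cos t0) with ((r - r0) * cos t + r0 * (cos t - cos t0)) by ring.
    eapply Rle_lt_trans. apply Rabs_triang. rewrite !Rabs_mult.
    assert (Rabs (cos t) <= 1) by (apply Rabs_le; apply COS_bound).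
    assert (Rabs (r - r0) * Rabs (cos t) <= Rabs (r - r0)).
    { pose proof (Rabs_pos (r - r0)). pose proof (Rabs_pos (cos t)). nra. }
    assert (Rabs r0 * Rabs (cos t - cos t0) <= Rabs r0 * k) by (apply Rmult_le_compat_l; [apply Rabs_pos|lra]).
    lra. }
  assert (A2 : Rabs (r * sin t - r0 * sin t0) < dF / 2).
  { replace (r * sin t - r0 * sin t0) with ((r - r0) * sin t + r0 * (sin t - sin t0)) by ring.
    eapply Rle_lt_trans. apply Rabs_triang. rewrite !Rabs_mult.
    assert (Rabs (sin t) <= 1) by (apply Rabs_le; apply SIN_bound).
    assert (Rabs (r - r0) * Rabs (sin t) <= Rabs (r - r0)).
    { pose proof (Rabs_pos (r - r0)). pose proof (Rabs_pos (sin t)). nra. }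
    assert (Rabs r0 * Rabs (sin t - sin t0) <= Rabs r0 * k) by (apply Rmult_le_compat_l; [apply Rabs_pos|lra]).
    lra. }
  lra.
Qed.


Lemma RInt_eq f a b (pr : Riemann_integrable f a b) : RInt f a b = RiemannInt pr.
Proof.
  unfold RInt. destruct (excluded_middle_informative _) as [H|H].
  - apply RiemannInt_P5.
  - exfalso; apply H; constructor; exact pr.
Qed.

Lemma RInt_nonint f a b : ~ inhabited (Riemann_integrable f a b) -> RInt f a b = 0.
Proof. intros H. unfold RInt. destruct (excluded_middle_informative _) as [H'|H']; [contradiction|auto]. Qed.



Lemma RInt_nonneg g a b : a <= b -> Riemann_integrable g a b ->
  (forall x, a < x < b -> 0 <= g x) -> 0 <= RInt g a b.
Proof.
  intros Hab pr H. rewrite (RInt_eq _ _ _ pr).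
  pose proof (RiemannInt_P19 (RiemannInt_P14 a b 0) pr Hab) as H1.
  rewrite RiemannInt_P15 in H1. replace 0 with (0 * (b - a)) by ring. apply H1.
  intros; unfold fct_cte; auto.
Qed.

Lemma RInt_le_scal f g a b c : a <= b -> 0 <= c -> Riemann_integrable g a b ->
  (forall x, a < x < b -> f x <= c * g x) -> (forall x, a < x < b -> 0 <= g x) ->
  RInt f a b <= c * RInt g a b.
Proof.
  intros Hab Hc prg Hfg Hg.
  assert (0 <= RInt g a b) by (apply RInt_nonneg; auto).
  destruct (classic (inhabited (Riemann_integrable f a b))) as [[prf]|Hn].
  - rewrite (RInt_eq _ _ _ prf), (RInt_eq _ _ _ prg).
    set (pr3 := RiemannInt_P10 c (RiemannInt_P14 a b 0) prg).
    pose proof (RiemannInt_P13 (RiemannInt_P14 a b 0) prg pr3) as E.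
    rewrite RiemannInt_P15 in E.
    pose proof (RiemannInt_P19 prf pr3 Hab) as H1.
    rewrite E in H1. rewrite Rmult_0_l, Rplus_0_l in H1. apply H1.
    intros x Hx. unfold fct_cte. rewrite Rplus_0_l. auto.
  - rewrite RInt_nonint by auto. nra.
Qed.

Definition inner (F : Cplx -> R) (r : R) : R := RInt (fun t => F (r * cos t, r * sin t)) 0 (2 * PI).
Definition outer (F : Cplx -> R) (r : R) : R := r * inner F r.

Lemma disc_int_outer F rho : disc_int F rho = / PI * RInt (outer F) 0 rho.
Proof. reflexivity. Qed.

Lemma twoPI_pos : 0 <= 2 * PI.
Proof. pose proof PI_RGT_0; lra. Qed.

Lemma polar_inD r t : Rabs r < 1 -> inD (r * cos t, r * sin t).
Proof. unfold inD; rewrite Cnorm_polar; auto. Qed.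

Lemma inner_integrable F r : (forall z, inD z -> rcont F z) -> Rabs r < 1 ->
  Riemann_integrable (fun t => F (r * cos t, r * sin t)) 0 (2 * PI).
Proof.
  intros HF Hr. apply continuity_implies_RiemannInt. apply twoPI_pos.
  intros t _. apply (jcont_cpt (fun r t => F (r * cos t, r * sin t))).
  apply polar_jcont. apply HF. apply polar_inD; auto.
Qed.

Lemma inner_cont F r0 : (forall z, inD z -> rcont F z) -> Rabs r0 < 1 -> continuity_pt (inner F) r0.
Proof.
  intros HF Hr0. apply eps_cpt. intros eps He.
  set (e := eps / (2 * PI + 1)).
  assert (He' : 0 < e) by (apply Rdiv_lt_0_compat; pose proof PI_RGT_0; lra).
  destruct (tube (fun r t => F (r * cos t, r * sin t)) r0 0 (2 * PI) twoPI_pos) with (eps := e) as [d [Hd H]]; auto.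
  { intros t _. apply polar_jcont. apply HF. apply polar_inD; auto. }
  exists (Rmin d (1 - Rabs r0)). split. apply Rmin_pos; lra.
  intros r Hr.
  assert (Hr1 : Rabs (r - r0) < d) by (eapply Rlt_le_trans; [exact Hr|apply Rmin_l]).
  assert (Hr2 : Rabs r < 1).
  { assert (Rabs (r - r0) < 1 - Rabs r0) by (eapply Rlt_le_trans; [exact Hr|apply Rmin_r]).
    replace r with ((r - r0) + r0) by ring. eapply Rle_lt_trans. apply Rabs_triang. lra. }
  pose proof (inner_integrable F r HF Hr2) as p1.
  pose proof (inner_integrable F r0 HF Hr0) as p0.
  unfold inner. rewrite (RInt_eq _ _ _ p1), (RInt_eq _ _ _ p0).
  set (p3 := RiemannInt_P10 (-1) p1 p0).
  pose proof (RiemannInt_P13 p1 p0 p3) as E.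
  destruct (@RiemannInt_const_bound _ 0 (2 * PI) (- e) e p3 twoPI_pos) as [B1 B2].
  { intros t Ht. specialize (H r Hr1 t (conj (Rlt_le _ _ (proj1 Ht)) (Rlt_le _ _ (proj2 Ht)))).
    apply Rabs_def2 in H. lra. }
  rewrite E in B1, B2.
  assert (e * (2 * PI - 0) < eps).
  { unfold e. apply (Rmult_lt_reg_r (2 * PI + 1)). pose proof PI_RGT_0; lra.
    replace (eps / (2 * PI + 1) * (2 * PI - 0) * (2 * PI + 1)) with (eps * (2 * PI)) by (field; pose proof PI_RGT_0; lra).
    pose proof PI_RGT_0. nra. }
  apply Rabs_def1; lra.
Qed.

Lemma outer_integrable F rho : (forall z, inD z -> rcont F z) -> 0 <= rho < 1 ->
  Riemann_integrable (outer F) 0 rho.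
Proof.
  intros HF Hrho. apply continuity_implies_RiemannInt. lra.
  intros x Hx. unfold outer. apply continuity_pt_mult.
  apply derivable_continuous_pt. apply derivable_pt_id.
  apply inner_cont; auto. rewrite Rabs_right; lra.
Qed.

Lemma inner_nonneg G r : (forall z, inD z -> rcont G z) -> (forall z, inD z -> 0 <= G z) -> Rabs r < 1 ->
  0 <= inner G r.
Proof.
  intros HG HG0 Hr. apply RInt_nonneg. apply twoPI_pos. apply inner_integrable; auto.
  intros; apply HG0. apply polar_inD; auto.
Qed.

Lemma disc_cmp F G c rho : 0 <= c -> 0 <= rho < 1 ->
  (forall z, inD z -> rcont G z) -> (forall z, inD z -> 0 <= G z) ->
  (forall z, inD z -> F z <= c * G z) -> disc_int F rho <= c * disc_int G rho.
Proof.
  intros Hc Hrho HG HG0 HFG. rewrite !disc_int_outer.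
  replace (c * (/ PI * RInt (outer G) 0 rho)) with (/ PI * (c * RInt (outer G) 0 rho)) by ring.
  apply Rmult_le_compat_l. left; apply Rinv_0_lt_compat, PI_RGT_0.
  apply RInt_le_scal; auto. lra. apply outer_integrable; auto.
  - intros x Hx. unfold outer.
    assert (Hx1 : Rabs x < 1) by (rewrite Rabs_right; lra).
    assert (inner F x <= c * inner G x).
    { apply RInt_le_scal; auto. apply twoPI_pos. apply inner_integrable; auto.
      intros t _; apply HFG, polar_inD; auto.
      intros t _; apply HG0, polar_inD; auto. }
    replace (c * (x * inner G x)) with (x * (c * inner G x)) by ring.
    apply Rmult_le_compat_l; lra.
  - intros x Hx. unfold outer. apply Rmult_le_pos. lra. apply inner_nonneg; auto. rewrite Rabs_right; lra.
Qed.


Lemma dot_abs (v u : Cplx) : Rabs (fst v * fst u + snd v * snd u) <= Cnorm v * Cnorm u.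
Proof.
  pose proof (Cnorm_ge0 v); pose proof (Cnorm_ge0 u).
  apply sq_le_le. nra. rewrite Rabs_sq.
  replace (Cnorm v * Cnorm u * (Cnorm v * Cnorm u)) with ((Cnorm v * Cnorm v) * (Cnorm u * Cnorm u)) by ring.
  rewrite !Cnorm_sq. pose proof (Rle_0_sqr (fst v * snd u - snd v * fst u)); unfold Rsqr in *; nra.
Qed.

Definition hline (f : Cplx -> Cplx) (z v : Cplx) (s : R) : R :=
  fst v * fst (f (s * fst z, s * snd z)) + snd v * snd (f (s * fst z, s * snd z)).

Lemma line_deriv f z v s l : 0 < Cnorm z -> Rabs s * Cnorm z < 1 ->
  is_cderiv_on inD f (s * fst z, s * snd z) l ->
  derivable_pt_lim (hline f z v) s (fst v * fst (Cmul l z) + snd v * snd (Cmul l z)).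
Proof.
  intros Hz Hs Hd eps He.
  set (r := Cnorm z) in *. pose proof (Cnorm_ge0 v) as Nv.
  set (e := eps / (Cnorm v * r + 1)).
  assert (He' : 0 < e) by (apply Rdiv_lt_0_compat; nra).
  destruct (Hd e He') as [d [Hd0 Hd1]].
  assert (Hpos : 0 < Rmin (d / r) ((1 - Rabs s * r) / r)).
  { apply Rmin_pos; apply Rdiv_lt_0_compat; lra. }
  exists (mkposreal _ Hpos). intros k Hk0 Hk. simpl in Hk.
  assert (Hk1 : Rabs k < d / r) by (eapply Rlt_le_trans; [exact Hk|apply Rmin_l]).
  assert (Hk2 : Rabs k < (1 - Rabs s * r) / r) by (eapply Rlt_le_trans; [exact Hk|apply Rmin_r]).
  apply (Rmult_lt_compat_r r) in Hk1; auto. apply (Rmult_lt_compat_r r) in Hk2; auto.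
  replace (d / r * r) with d in Hk1 by (field; lra).
  replace ((1 - Rabs s * r) / r * r) with (1 - Rabs s * r) in Hk2 by (field; lra).
  set (hh := (k * fst z, k * snd z)).
  assert (Nhh : Cnorm hh = Rabs k * r) by (apply Cnorm_scal).
  assert (Hhh0 : hh <> C0).
  { intro E. assert (Cnorm hh = 0) by (rewrite E; apply Cnorm_C0). rewrite Nhh in H.
    pose proof (Rabs_pos_lt k Hk0). nra. }
  assert (Hadd : Cadd (s * fst z, s * snd z) hh = ((s + k) * fst z, (s + k) * snd z)).
  { unfold Cadd, hh; simpl; f_equal; ring. }
  assert (HinD : inD (Cadd (s * fst z, s * snd z) hh)).
  { rewrite Hadd. unfold inD. rewrite Cnorm_scal. fold r.
    pose proof (Rabs_triang s k). nra. }
  specialize (Hd1 hh Hhh0 (ltac:(rewrite Nhh; lra)) HinD).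
  rewrite Hadd in Hd1. rewrite Nhh in Hd1.
  set (A := f ((s + k) * fst z, (s + k) * snd z)) in *.
  set (B := f (s * fst z, s * snd z)) in *.
  set (E := Csub (Csub A B) (Cmul l hh)) in *.
  assert (Eq : (hline f z v (s + k) - hline f z v s) / k - (fst v * fst (Cmul l z) + snd v * snd (Cmul l z))
     = (fst v * fst E + snd v * snd E) / k).
  { unfold hline. fold A B. unfold E, hh. destruct A, B, l, z, v. unfold Csub, Cmul; simpl. field. auto. }
  rewrite Eq. unfold Rdiv. rewrite Rabs_mult, Rabs_inv.
  pose proof (dot_abs v E).
  pose proof (Rabs_pos_lt k Hk0).
  apply (Rmult_lt_reg_r (Rabs k)); auto.
  rewrite Rmult_assoc, Rinv_l by lra. rewrite Rmult_1_r.
  eapply Rle_lt_trans. apply H.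
  assert (Cnorm v * Cnorm E <= Cnorm v * (e * (Rabs k * r))) by (apply Rmult_le_compat_l; auto).
  assert (Cnorm v * r * e < eps).
  { unfold e. apply (Rmult_lt_reg_r (Cnorm v * r + 1)). nra.
    replace (Cnorm v * r * (eps / (Cnorm v * r + 1)) * (Cnorm v * r + 1)) with (Cnorm v * r * eps) by (field; nra).
    nra. }
  nra.
Qed.

Lemma affine_deriv a b s : derivable_pt_lim (fun x => a + x * b) s b.
Proof.
  intros eps He. exists (mkposreal _ He). intros h Hh _.
  replace ((a + (s + h) * b - (a + s * b)) / h - b) with 0 by (field; auto).
  rewrite Rabs_R0; auto.
Qed.

Definition Phi (c r s : R) : R := c * (ln (1 + s * r) - ln (1 + s * (- r))).

Lemma Phi_deriv c r s : 0 < 1 + s * r -> 0 < 1 + s * (- r) ->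
  derivable_pt_lim (Phi c r) s (c * (/ (1 + s * r) * r - / (1 + s * (-r)) * (- r))).
Proof.
  intros H1 H2.
  apply (derivable_pt_lim_scal (fun s => ln (1 + s * r) - ln (1 + s * (- r))) c s).
  apply (derivable_pt_lim_minus (comp ln (fun x => 1 + x * r)) (comp ln (fun x => 1 + x * (-r)))).
  - apply derivable_pt_lim_comp. apply affine_deriv. apply derivable_pt_lim_ln; auto.
  - apply derivable_pt_lim_comp. apply affine_deriv. apply derivable_pt_lim_ln; auto.
Qed.


Lemma inD_C0 : inD C0.
Proof. unfold inD; rewrite Cnorm_C0; lra. Qed.

Lemma bloch_f0 f K : bloch_norm_le f K -> Cnorm (f C0) <= K.
Proof.
  intros [Han Hbd]. destruct (Han C0 inD_C0) as [l0 Hl0].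
  specialize (Hbd C0 l0 inD_C0 Hl0). rewrite Cnorm_C0 in Hbd.
  pose proof (Cnorm_ge0 l0). simpl in Hbd. nra.
Qed.

Lemma L_nonneg r : 0 <= r < 1 -> 0 <= ln (1 + r) - ln (1 - r).
Proof.
  intros Hr. destruct (Req_dec r 0). subst. rewrite Rplus_0_r, Rminus_0_r; lra.
  pose proof (ln_increasing (1 - r) (1 + r)). lra.
Qed.

Lemma bloch_growth f K z : bloch_norm_le f K -> inD z ->
  Cnorm (f z) <= K + K / 2 * (ln (1 + Cnorm z) - ln (1 - Cnorm z)).
Proof.
  intros Hb Hz. pose proof (bloch_f0 f K Hb) as Hf0.
  pose proof (Cnorm_ge0 (f C0)) as N0.
  destruct Hb as [Han Hbd].
  unfold inD in Hz. set (r := Cnorm z) in *. pose proof (Cnorm_ge0 z) as Nz. fold r in Nz.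
  set (v := Csub (f z) (f C0)).
  assert (Hfz : f z = Cadd (f C0) v) by (unfold v; rewrite Cadd_Csub; auto).
  pose proof (L_nonneg r (conj Nz Hz)) as HL.
  cut (Cnorm v <= K / 2 * (ln (1 + r) - ln (1 - r))).
  { intro H. rewrite Hfz. eapply Rle_trans. apply Cnorm_add. lra. }
  pose proof (Cnorm_ge0 v) as Nv.
  destruct (Req_dec r 0) as [Er|Er].
  { assert (z = C0) by (apply Cnorm_eq0; auto). unfold v. rewrite H, Csub_self, Cnorm_C0.
    rewrite Er, Rplus_0_r, Rminus_0_r, Rminus_diag. lra. }
  assert (Hr : 0 < r) by lra.
  set (c := Cnorm v * K / 2).
  set (F := (hline f z v - Phi c r)%F).
  assert (HD : forall s, 0 <= s <= 1 -> exists l, is_cderiv_on inD f (s * fst z, s * snd z) l /\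
             derivable_pt_lim F s ((fst v * fst (Cmul l z) + snd v * snd (Cmul l z)) -
                  c * (/ (1 + s * r) * r - / (1 + s * (-r)) * (- r)))).
  { intros s Hs.
    assert (Hsz : inD (s * fst z, s * snd z)).
    { unfold inD. rewrite Cnorm_scal. fold r. rewrite Rabs_right by lra. nra. }
    destruct (Han _ Hsz) as [l Hl]. exists l; split; auto.
    apply derivable_pt_lim_minus.
    - apply line_deriv; auto. rewrite Rabs_right by lra. fold r. assert (s * r <= 1 * r) by (apply Rmult_le_compat_r; lra). nra.
    - apply Phi_deriv; assert (s * r <= 1 * r) by (apply Rmult_le_compat_r; lra); nra. }
  set (df := fun s => epsilon (inhabits 0) (fun d => derivable_pt_lim F s d)).
  assert (Hdf : forall s, 0 <= s <= 1 -> derivable_pt_lim F s (df s)).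
  { intros s Hs. unfold df. apply epsilon_spec. destruct (HD s Hs) as [l [_ Hl]]. eauto. }
  destruct (MVT_cor2 F df 0 1 Rlt_0_1 Hdf) as [s [HM Hs]].
  assert (Hneg : df s <= 0).
  { destruct (HD s (conj (Rlt_le _ _ (proj1 Hs)) (Rlt_le _ _ (proj2 Hs)))) as [l [Hl HFl]].
    rewrite (uniqueness_limite F s (df s) _ (Hdf s (conj (Rlt_le _ _ (proj1 Hs)) (Rlt_le _ _ (proj2 Hs)))) HFl).
    assert (Hsz : inD (s * fst z, s * snd z)).
    { unfold inD. rewrite Cnorm_scal. fold r. rewrite Rabs_right by lra. nra. }
    specialize (Hbd _ l Hsz Hl). rewrite Cnorm_scal in Hbd. fold r in Hbd. rewrite Rabs_right in Hbd by lra.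
    set (q := 1 - s * s * r * r).
    assert (Hq : 0 < q). { unfold q. assert (Hsr : s * r < 1 * 1) by (apply Rmult_le_0_lt_compat; lra). assert (Hsr0 : 0 <= s * r) by (apply Rmult_le_pos; lra). replace (s * s * r * r) with ((s * r) * (s * r)) by ring. nra. }
    assert (Hlq : q * Cnorm l <= K).
    { unfold q. replace (1 - s * s * r * r) with (1 - (s * r) ^ 2) by ring. pose proof (Cnorm_ge0 (f C0)). lra. }
    pose proof (dot_abs v (Cmul l z)) as Hdot. rewrite Cnorm_mul in Hdot. fold r in Hdot.
    assert (Hdot2 : fst v * fst (Cmul l z) + snd v * snd (Cmul l z) <= Cnorm v * (Cnorm l * r)) by (eapply Rle_trans; [apply Rle_abs | exact Hdot]).
    assert (HP : c * (/ (1 + s * r) * r - / (1 + s * (- r)) * (- r)) * q = Cnorm v * K * r).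
    { unfold c, q. field. split; nra. }
    set (hd := fst v * fst (Cmul l z) + snd v * snd (Cmul l z)) in *.
    set (pd := c * (/ (1 + s * r) * r - / (1 + s * (- r)) * (- r))) in *.
    assert (hd * q <= Cnorm v * K * r).
    { pose proof (Cnorm_ge0 l).
      assert (Cnorm v * (Cnorm l * r) * q <= Cnorm v * K * r).
      { replace (Cnorm v * (Cnorm l * r) * q) with (Cnorm v * r * (q * Cnorm l)) by ring.
        replace (Cnorm v * K * r) with (Cnorm v * r * K) by ring.
        apply Rmult_le_compat_l; nra. }
      nra. }
    nra. }
  rewrite Rminus_0_r, Rmult_1_r in HM.
  assert (HF : F 1 - F 0 <= 0) by lra.
  unfold F, minus_fct, hline, Phi in HF.
  replace (1 * fst z, 1 * snd z) with z in HF by (destruct z; simpl; f_equal; ring).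
  replace (0 * fst z, 0 * snd z) with C0 in HF by (unfold C0; f_equal; ring).
  replace (1 + 0 * r) with 1 in HF by ring. replace (1 + 0 * - r) with 1 in HF by ring.
  replace (1 + 1 * r) with (1 + r) in HF by ring. replace (1 + 1 * - r) with (1 - r) in HF by ring.
  rewrite ln_1 in HF.
  assert (Hvv : fst v * fst (f z) + snd v * snd (f z) - (fst v * fst (f C0) + snd v * snd (f C0)) = Cnorm v * Cnorm v).
  { rewrite Cnorm_sq. unfold v, Csub; simpl. ring. }
  assert (Cnorm v * Cnorm v <= Cnorm v * (K / 2 * (ln (1 + r) - ln (1 - r)))).
  { unfold c in HF. lra. }
  destruct Nv as [Nv|Nv].
  - apply (Rmult_le_reg_l (Cnorm v)); [auto|lra].
  - rewrite <- Nv. pose proof (bloch_f0 f K (conj Han Hbd)). nra.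
Qed.


Lemma exp_mono x y : x <= y -> exp x <= exp y.
Proof. intros [H|H]. left; apply exp_increasing; auto. subst; lra. Qed.

Lemma ln_mono x y : 0 < x -> x <= y -> ln x <= ln y.
Proof. intros Hx [H|H]. left; apply ln_increasing; auto. subst; lra. Qed.

Lemma type_zero_of_order phi :
  (order_lt_one phi \/ (order_eq_one phi /\ type_zero_order_one phi)) -> type_zero_order_one phi.
Proof.
  intros [Ho | [_ Ht]]; auto.
  destruct Ho as [mu [Hmu [R0 [HR0 Hg]]]].
  intros sigma Hs.
  exists (Rmax R0 (exp (ln sigma / (mu - 1)))). split.
  { eapply Rlt_le_trans; [exact HR0| apply Rmax_l]. }
  intros z Hz. eapply Rle_trans. apply Hg. eapply Rle_trans; [apply Rmax_l| exact Hz].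
  apply exp_mono.
  set (x := Cnorm z) in *.
  assert (Hx : 0 < x) by (eapply Rlt_le_trans; [exact HR0|]; eapply Rle_trans; [apply Rmax_l|exact Hz]).
  assert (Hl : ln sigma / (mu - 1) <= ln x).
  { rewrite <- (ln_exp (ln sigma / (mu - 1))). apply ln_mono. apply exp_pos.
    eapply Rle_trans; [apply Rmax_r| exact Hz]. }
  unfold Rpower. rewrite <- (exp_ln x) at 2 by auto. rewrite <- (exp_ln sigma) at 1 by auto.
  rewrite <- exp_plus. apply exp_mono.
  apply (Rmult_le_compat_l (1 - mu)) in Hl; [|lra].
  replace ((1 - mu) * (ln sigma / (mu - 1))) with (- ln sigma) in Hl by (field; lra).
  lra.
Qed.

Lemma entire_ccont phi z : entire phi -> ccont (fun _ => True) phi z.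
Proof. intros He. destruct (He z) as [l Hl]. eapply deriv_cont; eauto. Qed.

Lemma abs_between x a : Rabs x <= a -> -a <= x <= a.
Proof. unfold Rabs; destruct (Rcase_abs x); lra. Qed.

Lemma phi_local_bound phi R0 : entire phi -> 0 <= R0 ->
  exists B, forall u, Cnorm u <= R0 -> Cnorm (phi u) <= B.
Proof.
  intros He HR0.
  destruct (square_bound (fun x t => Cnorm (phi (x, t))) (- R0) R0 (- R0) R0) as [B HB]; try lra.
  - intros x0 t0 _ _ eps Heps.
    destruct (entire_ccont phi (x0, t0) He eps Heps) as [d [Hd H]].
    exists (d / 2); split; [lra|]. intros r t Hr Ht.
    eapply Rle_lt_trans. apply Cnorm_rev_tri. apply H. auto.
    eapply Rle_lt_trans. apply Cnorm_le_sum. unfold Csub; simpl. lra.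
  - exists B. intros u Hu. destruct u as [x t].
    pose proof (Cnorm_fst (x, t)); pose proof (Cnorm_snd (x, t)). simpl in *.
    specialize (HB x t). rewrite Rabs_right in HB by (apply Rle_ge; apply Cnorm_ge0).
    apply HB; apply abs_between; [eapply Rle_trans; [apply H|exact Hu] | eapply Rle_trans; [apply H0|exact Hu]].
Qed.

Lemma phi_growth phi : entire phi ->
  (order_lt_one phi \/ (order_eq_one phi /\ type_zero_order_one phi)) ->
  forall sigma, 0 < sigma -> exists B, 0 <= B /\ forall u, Cnorm (phi u) <= B + exp (sigma * Cnorm u).
Proof.
  intros He Ho sigma Hs.
  destruct (type_zero_of_order phi Ho sigma Hs) as [R0 [HR0 Hg]].
  destruct (phi_local_bound phi R0 He (Rlt_le _ _ HR0)) as [B HB].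
  exists (Rmax 0 B). split. apply Rmax_l.
  intros u. pose proof (exp_pos (sigma * Cnorm u)).
  destruct (Rle_dec R0 (Cnorm u)).
  - pose proof (Hg u r). pose proof (Rmax_l 0 B). lra.
  - pose proof (HB u ltac:(lra)). pose proof (Rmax_r 0 B). lra.
Qed.


Lemma W_rcont p beta w z : 0 < p -> analytic_D w -> inD z -> rcont (bergman_integrand p beta w) z.
Proof.
  intros Hp Hw Hz. unfold bergman_integrand.
  apply (rcont_mul (fun u => rpow (1 - Cnorm u ^ 2) beta) (fun u => rpow (Cnorm (w u)) p)).
  - apply (rcont_comp (fun u => 1 - Cnorm u ^ 2) (fun x => rpow x beta)).
    + apply (rcont_comp Cnorm (fun x => 1 - x ^ 2)). apply rcont_Cnorm. reg.
    + apply rpow_cont_pos. unfold inD in Hz. pose proof (Cnorm_ge0 z). nra.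
  - apply (rcont_comp (fun u => Cnorm (w u)) (fun x => rpow x p)).
    + apply rcont_norm_ccont; auto. destruct (Hw z Hz) as [l Hl]. eapply deriv_cont; eauto.
    + apply rpow_cont; auto. apply Cnorm_ge0.
Qed.

Lemma W_nonneg p beta w z : 0 <= bergman_integrand p beta w z.
Proof. unfold bergman_integrand. apply Rmult_le_pos; apply rpow_ge0. Qed.

Lemma ln_x_bound r : 0 <= r < 1 ->
  ln (1 + r) - ln (1 - r) <= 2 * ln 2 - ln (1 - r ^ 2).
Proof.
  intros Hr. replace (1 - r ^ 2) with ((1 - r) * (1 + r)) by ring.
  rewrite ln_mult by lra. pose proof (ln_mono (1 + r) 2 ltac:(lra) ltac:(lra)). lra.
Qed.

Lemma pointwise_bound p alpha beta K B w phi f z :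
  0 < p -> beta < alpha -> 0 < K -> 0 <= B ->
  (forall u, Cnorm (phi u) <= B + exp ((alpha - beta) / (p * K) * Cnorm u)) ->
  bloch_norm_le f K -> inD z ->
  bergman_integrand p alpha (S_op phi w f) z <=
  exp (p * ln (B + exp ((alpha - beta) / (p * K) * K * (1 + ln 2)))) * bergman_integrand p beta w z.
Proof.
  intros Hp Hab HK HB Hphi Hf Hz.
  set (sigma := (alpha - beta) / (p * K)) in *.
  assert (Hs : 0 < sigma) by (unfold sigma; apply Rdiv_lt_0_compat; nra).
  set (A := B + exp (sigma * K * (1 + ln 2))).
  assert (HA : 0 < A) by (unfold A; pose proof (exp_pos (sigma * K * (1 + ln 2))); lra).
  pose proof (bloch_growth f K z Hf Hz) as Hg.
  unfold inD in Hz. set (r := Cnorm z) in *. pose proof (Cnorm_ge0 z) as Nr. fold r in Nr.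
  set (x := 1 - r ^ 2).
  assert (Hx : 0 < x) by (unfold x; nra).
  assert (Hx1 : x <= 1) by (unfold x; nra).
  assert (Hlnx : ln x <= 0) by (rewrite <- ln_1; apply ln_mono; auto).
  pose proof (ln_x_bound r (conj Nr Hz)) as Hl. fold x in Hl.
  set (u := f z) in *.
  set (gam := sigma * K / 2).
  assert (Hsu : sigma * Cnorm u <= sigma * K * (1 + ln 2) + (- gam * ln x)).
  { unfold gam. apply (Rmult_le_compat_l sigma) in Hg; [|lra].
    apply (Rmult_le_compat_l (sigma * K / 2)) in Hl; [|nra]. nra. }
  assert (Hphiu : Cnorm (phi u) <= A * exp (- gam * ln x)).
  { assert (Hg0 : 0 <= - gam * ln x) by (unfold gam; assert (0 < sigma * K / 2) by nra; nra).
    assert (1 <= exp (- gam * ln x)) by (rewrite <- exp_0; apply exp_mono; lra).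
    eapply Rle_trans. apply Hphi. fold sigma.
    assert (exp (sigma * Cnorm u) <= exp (sigma * K * (1 + ln 2)) * exp (- gam * ln x)).
    { rewrite <- exp_plus. apply exp_mono. lra. }
    unfold A. rewrite Rmult_plus_distr_r. nra. }
  unfold bergman_integrand, S_op. fold r. fold x. fold u.
  rewrite Cnorm_mul.
  pose proof (Cnorm_ge0 (w z)) as Nw. pose proof (Cnorm_ge0 (phi u)) as Np.
  assert (HC : 0 < exp (p * ln A)) by apply exp_pos.
  destruct (Rle_lt_dec (Cnorm (w z) * Cnorm (phi u)) 0) as [H0|H0].
  { rewrite (rpow_nonpos _ p H0), Rmult_0_r. apply Rmult_le_pos. lra.
    apply Rmult_le_pos; apply rpow_ge0. }
  assert (Hw0 : 0 < Cnorm (w z)) by (destruct Nw; auto; rewrite <- H in H0; lra).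
  assert (Hp0 : 0 < Cnorm (phi u)) by (destruct Np; auto; rewrite <- H in H0; lra).
  rewrite !rpow_pos by auto. unfold Rpower.
  rewrite ln_mult by auto.
  assert (Hlnphi : ln (Cnorm (phi u)) <= ln A + - gam * ln x).
  { rewrite <- (ln_exp (- gam * ln x)). rewrite <- ln_mult by (auto; apply exp_pos). apply ln_mono; auto. }
  rewrite <- !exp_plus. apply exp_mono.
  assert (Hpg : p * gam = (alpha - beta) / 2) by (unfold gam, sigma; field; lra).
  assert (p * ln (Cnorm (phi u)) <= p * (ln A + - gam * ln x)) by (apply Rmult_le_compat_l; lra).
  nra.
Qed.


Lemma bloch_mono f K K' : bloch_norm_le f K -> K <= K' -> bloch_norm_le f K'.
Proof. intros [Ha Hb] HK. split; auto. intros z l Hz Hl. specialize (Hb z l Hz Hl). lra. Qed.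

Theorem theorem2 (p alpha beta : R) (w phi : Cplx -> Cplx) :
  0 < p -> -1 < alpha -> -1 < beta -> beta < alpha ->
  in_Apg p beta w ->
  entire phi ->
  (order_lt_one phi \/ (order_eq_one phi /\ type_zero_order_one phi)) ->
  (forall f, in_Bloch f -> in_Apg p alpha (S_op phi w f)) /\
  (forall K, 0 < K -> exists CK, forall f, bloch_norm_le f K ->
      bergman_int_le p alpha (S_op phi w f) CK).
Proof.
  intros Hp Ha Hb Hab [Hwan [M HM]] Hent Hord.
  assert (Part2 : forall K, 0 < K -> exists CK, forall f, bloch_norm_le f K ->
      bergman_int_le p alpha (S_op phi w f) CK).
  { intros K HK.
    assert (Hs : 0 < (alpha - beta) / (p * K)) by (apply Rdiv_lt_0_compat; nra).
    destruct (phi_growth phi Hent Hord _ Hs) as [B [HB HBg]].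
    set (C := exp (p * ln (B + exp ((alpha - beta) / (p * K) * K * (1 + ln 2))))).
    exists (C * M). intros f Hf rho Hrho.
    assert (HC : 0 <= C) by (left; apply exp_pos).
    eapply Rle_trans.
    - apply (disc_cmp _ (bergman_integrand p beta w) C rho HC Hrho).
      + intros z Hz. apply W_rcont; auto.
      + intros z _. apply W_nonneg.
      + intros z Hz. apply pointwise_bound; auto.
    - apply Rmult_le_compat_l; auto. }
  split; auto.
  intros f [K HK].
  assert (HK1 : bloch_norm_le f (Rmax K 1)) by (eapply bloch_mono; eauto; apply Rmax_l).
  split.
  - intros z Hz. destruct HK as [Hfan _].
    destruct (Hwan z Hz) as [l1 Hl1]. destruct (Hfan z Hz) as [l2 Hl2].
    destruct (Hent (f z)) as [l3 Hl3].
    unfold S_op. eexists.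
    apply (prod_rule inD w (fun u => phi (f u))); eauto.
    apply chain_rule; eauto.
  - destruct (Part2 (Rmax K 1)) as [CK HCK]. eapply Rlt_le_trans; [apply Rlt_0_1|apply Rmax_r].
    exists CK. auto.
Qed.
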